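(* Let $\Omega=(0,L)^2$ with periodic boundary conditions, $M$ a positive integer, $h=L/M$, and let $\mathbb{V}_h\cong\mathbb{R}^{M^2}$ be the space of real grid functions on the periodic grid $\{(ih,jh):1\le i,j\le M\}$. Let $\Lambda_h$ be the standard five-point central-difference matrix of the Laplacian on this grid with periodic boundary conditions, and let $\varepsilon>0$. Let $0=t_0<t_1<\dots<t_N=T$ be a time grid with steps $\tau_k=t_k-t_{k-1}$, step ratios $r_k=\tau_k/\tau_{k-1}$ for $2\le k\le N$ and $r_1:=0$. Given $u^0\in\mathbb{V}_h$, consider the scheme $$D_2u^n=\varepsilon^2\Lambda_hu^n-f(u^n),\qquad n\ge1,$$ where $f(u)=u^{3}-u$ componentwise, $D_2u^1=(u^1-u^0)/\tau_1$ and, for $n\ge2$, $$D_2u^n=\frac{1+2r_n}{\tau_n(1+r_n)}(u^n-u^{n-1})-\frac{r_n^2}{\tau_n(1+r_n)}(u^{n-1}-u^{n-2}).$$ If $\tau_n<\frac{1+2r_n}{1+r_n}$ for $n\ge1$, then the scheme is uniquely solvable, i.e. for every $n\ge1$, given $u^0,\dots,u^{n-1}$ there exists a unique $u^n\in\mathbb{V}_h$ satisfying the $n$-th equation.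
   Context: $\Lambda_h$ is symmetric and negative semi-definite. Cubes and other nonlinear operations on vectors are taken componentwise. *)

(* Defs.v *)
From HB Require Import structures.
From mathcomp Require Import all_boot all_order all_algebra.
From mathcomp Require Import reals.
Set Implicit Arguments. Unset Strict Implicit. Unset Printing Implicit Defensive.
Import Order.TTheory GRing.Theory Num.Theory.
Local Open Scope ring_scope.

(* A grid function on the periodic grid {(ih,jh) : 1 <= i,j <= M}:
   entry (i,j) of an M x M matrix (index i : 'I_M stands for grid index i+1;
   with periodicity index M is identified with index 0). *)
Definition gridfun (R : realType) (M : nat) := 'M[R]_(M, M).

Definition Lap_h (R : realType) (M : nat) (h : R) (u : gridfun R M) : gridfun R M :=
  \matrix_(i, j)
    ((u (ordS i) j + u (ord_pred i) j + u i (ordS j) + u i (ord_pred j)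
      - 4 * u i j) / h ^+ 2).

Definition f_AC (R : realType) (M : nat) (u : gridfun R M) : gridfun R M :=
  \matrix_(i, j) (u i j ^+ 3 - u i j).

Definition step_ratio (R : realType) (tau : nat -> R) (k : nat) : R :=
  if (k <= 1)%N then 0 else tau k / tau k.-1.

(* BDF2 difference quotient D_2 u^n, given the candidate un = u^n and the
   previous values u1 = u^(n-1), u2 = u^(n-2) (u2 unused when n = 1). *)
Definition D2 (R : realType) (M : nat) (tau : nat -> R) (n : nat)
  (un u1 u2 : gridfun R M) : gridfun R M :=
  if n == 1%N then (tau 1)^-1 *: (un - u1)
  else let r := step_ratio tau n in
       ((1 + 2 * r) / (tau n * (1 + r))) *: (un - u1)
       - (r ^+ 2 / (tau n * (1 + r))) *: (u1 - u2).

Definition scheme_eq (R : realType) (M : nat) (h eps : R) (tau : nat -> R)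
  (n : nat) (u : nat -> gridfun R M) (v : gridfun R M) : Prop :=
  D2 tau n v (u n.-1) (u n.-2) = eps ^+ 2 *: Lap_h h v - f_AC v.

(* Main.v *)
Require Import Defs.
From HB Require Import structures.
From mathcomp Require Import all_boot all_order all_algebra.
From mathcomp Require Import reals.
From mathcomp Require Import all_classical all_reals all_analysis.
From mathcomp Require Import ring lra.
Import Order.TTheory GRing.Theory Num.Def Num.Theory.
Local Open Scope ring_scope.
HB.instance Definition _ (R : realType) (m n : nat) := NormedModule.copy 'M[R]_(m,n) 'M[R]_(m,n).

Section Aux.
Variable R : realType.

Lemma phi_surj (c y : R) : 0 < c -> exists x : R, x ^+ 3 + c * x = y.
Proof.
move=> c0.
pose p : {poly R} := 'X^3 + c%:P * 'X - y%:P.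
have [a b] : (- (`|y| / c) <= `|y| / c) /\ (p.[- (`|y| / c)] <= 0 <= p.[`|y| / c]).
  have hb : 0 <= `|y| / c by rewrite divr_ge0 // ltW.
  have e : c * (`|y| / c) = `|y| by rewrite mulrC divfK // gt_eqF.
  split; first by lra.
  rewrite /p !(hornerD, hornerN, hornerM, hornerC, hornerX, hornerXn); apply/andP; split.
    set t := `|y| / c.
    have -> : (- t) ^+ 3 + c * - t - y = - (t ^+ 3) - (c * t) - y by ring.
    have e' : c * t = `|y| by exact: e.
    rewrite e'.
    have : 0 <= t ^+ 3 by rewrite exprn_ge0.
    have := ler_norm (- y); rewrite normrN; lra.
  set t := `|y| / c.
  have e' : c * t = `|y| by exact: e.
  have : 0 <= t ^+ 3 by rewrite exprn_ge0.
  have := ler_norm y; lra.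
have [x _ rx] := poly_ivt a b.
exists x; move: rx; rewrite /root /p !(hornerD, hornerN, hornerM, hornerC, hornerX, hornerXn) subr_eq0 => /eqP.
by [].
Qed.

Lemma phi_lip (c x z : R) : 0 < c ->
  c * `|x - z| <= `|(x ^+ 3 + c * x) - (z ^+ 3 + c * z)|.
Proof.
move=> c0.
have -> : (x ^+ 3 + c * x) - (z ^+ 3 + c * z) = (x - z) * (x ^+ 2 + x * z + z ^+ 2 + c) by ring.
have q0 : 0 <= x ^+ 2 + x * z + z ^+ 2.
  have : 0 <= (x + z) ^+ 2 by exact: sqr_ge0.
  have : 0 <= x ^+ 2 by exact: sqr_ge0.
  have : 0 <= z ^+ 2 by exact: sqr_ge0.
  rewrite sqrrD; lra.
rewrite normrM [X in _ <= _ * X]ger0_norm; last by lra.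
rewrite mulrC ler_wpM2l //; lra.
Qed.

End Aux.


Local Open Scope classical_set_scope.
Section Aux2.
Variable R : realType.

Definition nb m (v : 'M[R]_(m, m)) i j :=
  v (ordS i) j + v (ord_pred i) j + v i (ordS j) + v i (ord_pred j).

Arguments nb {m}.

Lemma banach_uniq (X : completeNormedModType R) (f : X -> X) (q : R) :
  0 <= q -> q < 1 -> (forall x y, `|f x - f y| <= q * `|x - y|) ->
  exists! p, p = f p.
Proof.
move=> q0 q1 Hf.
pose F : {fun [set: X] >-> [set: X]} := totalfun_ setT f.
have ctr : is_contraction F.
  exists (NngNum q0); split => //= -[x y] _ /=; exact: Hf.
have [p _ pE] := banach_fixed_point ctr closedT (ex_intro _ 0 I).
exists p; split => // y yE.
exact: (contraction_fixpoint_unique ctr I I pE yE).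
Qed.

Lemma mx_entry_le m n (A : 'M[R]_(m, n)) i j : `|A i j| <= `|A|.
Proof.
by rewrite [leRHS]/normr /= mx_normrE; apply/bigmax_geP; right => /=; exists (i, j).
Qed.

Lemma mx_le_entries m n (A : 'M[R]_(m, n)) e : 0 <= e ->
  (forall i j, `|A i j| <= e) -> `|A| <= e.
Proof.
move=> e0 H; rewrite [leLHS]/normr /= mx_normrE; apply/bigmax_leP; split => // -[i j] _; exact: H.
Qed.

Lemma fix_uniq m (c k : R) (G : 'M[R]_(m, m)) : 0 < c -> 0 <= k -> 4 * k < c ->
  exists! v : 'M[R]_(m, m), forall i j, v i j ^+ 3 + c * v i j = G i j + k * nb v i j.
Proof.
move=> c0 k0 kc.
have [psi psiE] := boolp.choice (fun y => @phi_surj R c y c0).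
have psiL y z : `|psi y - psi z| <= `|y - z| / c.
  rewrite ler_pdivlMr // mulrC.
  by have := @phi_lip R c (psi y) (psi z) c0; rewrite !psiE.
have psiI x y : x ^+ 3 + c * x = y -> x = psi y.
  move=> H; apply/eqP; rewrite -subr_eq0 -normr_eq0 eq_le normr_ge0 andbT.
  have := @phi_lip R c x (psi y) c0; rewrite H psiE subrr normr0 => h.
  by rewrite -(pmulr_rle0 _ c0).
pose T (v : 'M[R]_(m, m)) : 'M[R]_(m, m) := \matrix_(i, j) psi (G i j + k * nb v i j).
have equiv (v : 'M[R]_(m, m)) : (forall i j, v i j ^+ 3 + c * v i j = G i j + k * nb v i j) <-> v = T v.
  split => [H | E].
    by apply/matrixP => i j; rewrite mxE; apply: psiI.
  move=> i j; have := congr1 (fun A : 'M[R]_(m, m) => A i j) E; rewrite /= mxE => ->; exact: psiE.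
have q0 : 0 <= 4 * k / c by apply: divr_ge0; [rewrite mulr_ge0 | rewrite ltW].
have q1 : 4 * k / c < 1 by rewrite ltr_pdivrMr // mul1r.
have HL : forall x y, `|T x - T y| <= 4 * k / c * `|x - y|.
  move=> x y; apply: mx_le_entries.
    by rewrite mulr_ge0.
  move=> i j; rewrite !mxE; apply: le_trans (psiL _ _) _.
  rewrite ler_pdivrMr // [leRHS]mulrAC divfK ?gt_eqF //.
  have -> : G i j + k * nb x i j - (G i j + k * nb y i j) = k * (nb x i j - nb y i j) by ring.
  rewrite normrM ger0_norm //.
  rewrite [4 * k]mulrC -mulrA ler_wpM2l //.
  have -> : nb x i j - nb y i j = nb (x - y) i j by rewrite /nb !mxE; ring.
  rewrite /nb.
  have h1 := @mx_entry_le _ _ (x - y) (ordS i) j.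
  have h2 := @mx_entry_le _ _ (x - y) (ord_pred i) j.
  have h3 := @mx_entry_le _ _ (x - y) i (ordS j).
  have h4 := @mx_entry_le _ _ (x - y) i (ord_pred j).
  set a := (x - y) (ordS i) j in h1 *.
  set b := (x - y) (ord_pred i) j in h2 *.
  set d := (x - y) i (ordS j) in h3 *.
  set e := (x - y) i (ord_pred j) in h4 *.
  apply: le_trans (ler_normD _ _) _.
  apply: le_trans (lerD (ler_normD _ _) (lexx _)) _.
  apply: le_trans (lerD (lerD (ler_normD _ _) (lexx _)) (lexx _)) _.
  lra.
have [p [pE pU]] := @banach_uniq _ T _ q0 q1 HL.
exists p; split; first by apply/equiv.
by move=> y /equiv; apply: pU.
Qed.

End Aux2.
Local Close Scope classical_set_scope.
Arguments nb {R m}.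


Lemma eq_shift (R : realType) (a b c d : R) : a - b = c - d -> (a = b <-> c = d).
Proof.
move=> E; split => H; apply/eqP; rewrite -subr_eq0.
  by rewrite -E H subrr.
by rewrite E H subrr.
Qed.

Theorem lemma3p2 (R : realType) (L : R) (M N : nat) (eps : R) (tau : nat -> R) :
  0 < L -> (0 < M)%N -> 0 < eps ->
  (forall k, (1 <= k <= N)%N -> 0 < tau k) ->
  (forall n, (1 <= n <= N)%N ->
     tau n < (1 + 2 * step_ratio tau n) / (1 + step_ratio tau n)) ->
  forall n, (1 <= n <= N)%N ->
  forall u : nat -> gridfun R M,
    exists! v : gridfun R M, scheme_eq (L / M%:R) eps tau n u v.
Proof.
move=> L0 M0 eps0 tau0 cond n /andP[n1 nN] u.
have t0 : 0 < tau n by apply: tau0; rewrite n1.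
have r0 : 0 <= step_ratio tau n.
  rewrite /step_ratio; case: ifP => // /negbT; rewrite -ltnNge => n2.
  rewrite divr_ge0 // ltW // tau0 //; apply/andP; split.
    by case: n n2 {n1 nN t0} => [|[|n]].
  by apply: leq_trans (leq_pred n) nN.
have hc := cond n; rewrite n1 nN in hc; have {}hc := hc isT.
set r := step_ratio tau n in r0 hc.
set h := L / M%:R.
set a := (1 + 2 * r) / (tau n * (1 + r)).
have a1 : 1 < a.
  rewrite /a ltr_pdivlMr ?mulr_gt0 // ?mul1r; last by lra.
  by move: hc; rewrite ltr_pdivlMr //; lra.
set k := eps ^+ 2 / h ^+ 2.
have k0 : 0 <= k by rewrite divr_ge0 // sqr_ge0.
set c := a - 1 + 4 * k.
set Bm : 'M[R]_(M, M) := if n == 1%N then 0 else (r ^+ 2 / (tau n * (1 + r))) *: (u n.-1 - u n.-2).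
set G : 'M[R]_(M, M) := a *: u n.-1 + Bm.
have claim (v : 'M[R]_(M, M)) : scheme_eq h eps tau n u v <->
    forall i j, v i j ^+ 3 + c * v i j = G i j + k * nb v i j.
  have D2E : D2 tau n v (u n.-1) (u n.-2) = a *: (v - u n.-1) - Bm.
    rewrite /D2 /Bm; case: (eqVneq n 1%N) => [n1'|nn1] //.
    rewrite subr0; congr (_ *: _).
    by rewrite /a /r n1' /step_ratio /= mulr0 addr0 mulr1 div1r.
  rewrite /scheme_eq D2E /Lap_h /f_AC.
  split => [/matrixP H i j | H]; [move: (H i j) | apply/matrixP => i j; move: (H i j)];
    rewrite /G /nb !mxE.
  1,2: move=> X; apply/eqP; rewrite -subr_eq0; apply/eqP; move/eqP: X; rewrite -subr_eq0 => /eqP <-; rewrite /c /k; ring.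
have [|||p [Hp U]] := @fix_uniq R M c k G.
- by rewrite /c; lra.
- by [].
- by rewrite /c; lra.
exists p; split; first by apply/claim.
by move=> y /claim; apply: U.
Qed.
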